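(* Let $a\ne b$ be letters and let $w=a^{n_1}b^{n_2}a$ or $w=ab^{n_2}a^{n_1}$, where $n_1\ge1$ and $n_2\in\{3,4\}$. Then every element of $\mathtt{BR}(w)$ is rich.
   Context: For a word $w=w_1\cdots w_n$, $w^R=w_n\cdots w_1$; $w$ is a palindrome if $w=w^R$; a factor of $w$ is a word $u$ with $w=puq$. A word $w$ is rich if the number of distinct nonempty palindromic factors of $w$ equals $|w|$. The block reversal of a nonempty word $w$ is $\mathtt{BR}(w)=\{B_t\cdots B_1 : w=B_1\cdots B_t,\ t\ge1,\ \text{each } B_i \text{ nonempty}\}$. *)

(* Defs.v *)
From mathcomp Require Import all_boot.
Set Implicit Arguments. Unset Strict Implicit. Unset Printing Implicit Defensive.

Section Words.
Variable T : eqType.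

Definition palindrome (w : seq T) : bool := w == rev w.

Definition factors (w : seq T) : seq (seq T) :=
  [seq take l (drop i w) | i <- iota 0 (size w).+1, l <- iota 0 (size w).+1].

Definition pal_factors (w : seq T) : seq (seq T) :=
  undup [seq u <- factors w | (u != [::]) && palindrome u].

Definition rich (w : seq T) : Prop := size (pal_factors w) = size w.

Definition in_BR (w v : seq T) : Prop :=
  exists Bs : seq (seq T),
    [/\ Bs != [::], all (fun B => B != [::]) Bs,
        w = flatten Bs & v = flatten (rev Bs)].
End Words.

(* Main.v *)
Require Import Defs.
From mathcomp Require Import all_boot.
From mathcomp Require Import zify.
Set Implicit Arguments. Unset Strict Implicit. Unset Printing Implicit Defensive.

Section Gen.
Variable T : eqType.
Implicit Types (u w z p s : seq T).

Lemma mem_factors u w : (u \in factors w) = infix u w.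
Proof.
apply/idP/idP.
- case/allpairsP=> [[i l] /= [_ _ ->]].
  apply/infixP; exists (take i w), (drop l (drop i w)).
  by rewrite cat_take_drop cat_take_drop.
- case/infixP=> s [s' ->]; apply/allpairsP; exists (size s, size u) => /=.
  split; try by rewrite inE mem_iota !size_cat; lia.
  by rewrite drop_size_cat // take_size_cat.

Qed.

Lemma mem_pal u w :
  (u \in pal_factors w) = [&& u != [::], palindrome u & infix u w].
Proof. by rewrite /pal_factors mem_undup mem_filter mem_factors andbA. Qed.

Lemma pal_uniq w : uniq (pal_factors w).
Proof. exact: undup_uniq. Qed.

Lemma infix_size u w : infix u w -> size u <= size w.
Proof. by case/infixP=> s [s' ->]; rewrite !size_cat; lia. Qed.

Lemma pal_suffix_short u1 u2 w c :
  palindrome u1 -> palindrome u2 -> suffix u1 (rcons w c) ->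
  suffix u2 (rcons w c) -> size u1 < size u2 -> infix u1 w.
Proof.
move=> /eqP p1 /eqP p2 s1 s2 lt12.
have su : suffix u1 u2.
  move: s1 s2; rewrite !suffixE => /eqP e1 /eqP e2.
  have z1 : size u1 <= size (rcons w c) by rewrite -e1 size_drop; lia.
  have z2 : size u2 <= size (rcons w c) by rewrite -e2 size_drop; lia.
  apply/eqP; transitivity (drop (size u2 - size u1)
     (drop (size (rcons w c) - size u2) (rcons w c))); first by rewrite e2.
  rewrite drop_drop -[in RHS]e1; congr drop; lia.
case/suffixP: su => t et.
have : u2 = u1 ++ rev t by rewrite p2 et rev_cat -p1.
case/lastP: (rev t) => [|t' x] E.
  by move: lt12; rewrite E cats0 ltnn.
case/suffixP: s2 => q eq.
move: eq; rewrite E -!rcons_cat => /rcons_inj [-> _].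
by rewrite infix_infix.
Qed.

Lemma size_le1 (s : seq (seq T)) :
  uniq s -> {in s &, forall x y, x = y} -> size s <= 1.
Proof.
case: s => [|x [|y s]] //= /andP [] + _ H.
by rewrite inE (H x y) ?inE ?eqxx ?orbT // eqxx.
Qed.

Definition newpal w c := [seq u <- pal_factors (rcons w c) | ~~ infix u w].

Lemma newpal_le1 w c : size (newpal w c) <= 1.
Proof.
apply: size_le1; first by rewrite filter_uniq ?pal_uniq.
have key : forall x, x \in newpal w c -> [/\ palindrome x, suffix x (rcons w c) & ~~ infix x w].
  move=> x; rewrite mem_filter mem_pal => /andP [ni /and3P [_ px ix]].
  split=> //; move: ix; rewrite infix_rconsl; case/orP => //.
  by move=> h; rewrite h in ni.
move=> x y /key [px sx nx] /key [py sy ny].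
case: (ltngtP (size x) (size y)) => h.
- by rewrite (pal_suffix_short px py sx sy h) in nx.
- by rewrite (pal_suffix_short py px sy sx h) in ny.
- by move: sx sy; rewrite !suffixE h => /eqP <- /eqP.
Qed.

Lemma pal_rcons_le w c :
  size (pal_factors (rcons w c)) <= (size (pal_factors w)).+1.
Proof.
have -> : (size (pal_factors w)).+1 = size (pal_factors w) + 1 by lia.
apply: leq_trans (leq_add (leqnn _) (newpal_le1 w c)).
rewrite -size_cat; apply: uniq_leq_size; first exact: pal_uniq.
move=> u uin; rewrite mem_cat; case iw: (infix u w).
- by move: uin; rewrite !mem_pal iw => /and3P [-> -> _].
- by rewrite mem_filter iw uin orbT.
Qed.

Lemma pal_le w : size (pal_factors w) <= size w.
Proof.
elim/last_ind: w => [|w c IH]; first by rewrite /pal_factors /factors.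
by rewrite size_rcons; apply: leq_trans (pal_rcons_le w c) _.
Qed.

Lemma rich_step w c u :
  u != [::] -> palindrome u -> suffix u (rcons w c) -> ~~ infix u w ->
  rich w -> rich (rcons w c).
Proof.
move=> nu pu su ni; rewrite /rich => rw.
apply/eqP; rewrite eqn_leq pal_le /= size_rcons -rw.
have -> : (size (pal_factors w)).+1 = size (u :: pal_factors w) by [].
apply: uniq_leq_size.
  by rewrite /= pal_uniq mem_pal (negbTE ni) !andbF.
move=> v; rewrite inE => /orP [/eqP ->|].
  by rewrite mem_pal nu pu suffixW.
rewrite !mem_pal => /and3P [-> -> iv] /=.
by rewrite -cats1 infix_catr.
Qed.

Lemma rich_rcons_prefix w c : rich (rcons w c) -> rich w.
Proof.
rewrite /rich size_rcons => h.
have := pal_rcons_le w c; rewrite h ltnS => h2.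
by apply/eqP; rewrite eqn_leq pal_le h2.
Qed.

Lemma rich_prefix w s : rich (w ++ s) -> rich w.
Proof.
elim/last_ind: s => [|s c IH]; first by rewrite cats0.
by rewrite -rcons_cat => /rich_rcons_prefix.
Qed.

Lemma mem_map_rev (s : seq (seq T)) u : (u \in map rev s) = (rev u \in s).
Proof.
apply/mapP/idP => [[v vin ->]|h]; first by rewrite revK.
by exists (rev u); rewrite ?revK.
Qed.

Lemma rich_rev w : rich (rev w) <-> rich w.
Proof.
rewrite /rich size_rev.
have -> : size (pal_factors (rev w)) = size (pal_factors w).
  rewrite -(size_map rev (pal_factors w)); apply: perm_size; apply: uniq_perm.
  - exact: pal_uniq.
  - by rewrite map_inj_uniq ?pal_uniq //; apply: (can_inj (@revK T)).
  move=> u; rewrite mem_map_rev !mem_pal -infix_revLR.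
  have -> : (rev u != [::]) = (u != [::]) by rewrite -!size_eq0 size_rev.
  have -> : palindrome (rev u) = palindrome u.
    by rewrite /palindrome revK eq_sym.
  done.
done.
Qed.

Lemma in_BR_rev w v : in_BR (rev w) v -> in_BR w (rev v).
Proof.
case=> Bs [nBs aBs ew ev]; exists (rev (map rev Bs)); split.
- by rewrite -size_eq0 size_rev size_map size_eq0.
- rewrite all_rev all_map; apply/allP => B Bin /=.
  by rewrite -size_eq0 size_rev size_eq0; apply: (allP aBs).
- by rewrite -[w]revK ew rev_flatten.
- by rewrite ev rev_flatten map_rev.
Qed.

Lemma in_BR_inv w v : in_BR w v ->
  v = w \/ exists B rest v', [/\ w = B ++ rest, B != [::], rest != [::],
                              in_BR rest v' & v = v' ++ B].
Proof.
case=> [[|B Bs]] [//= _ /= /andP [nB aBs] -> ->].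
case: Bs aBs => [|B' Bs'] aBs; first by left; rewrite /= !cats0.
right; exists B, (flatten (B' :: Bs')), (flatten (rev (B' :: Bs'))); split => //.
- move: aBs => /= /andP [] ; by case: B'.
- by exists (B' :: Bs').
- by rewrite rev_cons flatten_rcons.
Qed.

End Gen.

Section Map.
Variables (S T : eqType) (f : S -> T).
Hypothesis finj : injective f.

Lemma infix_map_inv u s : infix u (map f s) ->
  exists u', u = map f u' /\ infix u' s.
Proof.
case/infixP=> p [q e]; exists (take (size u) (drop (size p) s)); split.
  by rewrite map_take map_drop e drop_size_cat // take_size_cat.
apply/infixP; exists (take (size p) s), (drop (size u) (drop (size p) s)).
by rewrite !cat_take_drop.
Qed.

Lemma infix_map u s : infix (map f u) (map f s) = infix u s.
Proof.
apply/idP/idP.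
  by case/infix_map_inv=> u' [/(inj_map finj) ->].
by case/infixP=> p [q ->]; rewrite !map_cat infix_infix.
Qed.

Lemma pal_map u : palindrome (map f u) = palindrome u.
Proof. by rewrite /palindrome -map_rev (inj_eq (inj_map finj)). Qed.

Lemma rich_map s : rich (map f s) <-> rich s.
Proof.
rewrite /rich size_map.
have -> : size (pal_factors (map f s)) = size (pal_factors s).
  rewrite -(size_map (map f) (pal_factors s)); apply: perm_size; apply: uniq_perm.
  - exact: undup_uniq.
  - by rewrite map_inj_uniq ?undup_uniq //; apply: inj_map.
  move=> u; apply/idP/idP.
  - rewrite /pal_factors mem_undup mem_filter mem_factors => /andP [/andP [nu pu] iu].
    case: (infix_map_inv iu) => u' [eu iu']; subst u.
    apply/mapP; exists u' => //.
    rewrite mem_undup mem_filter mem_factors iu' -pal_map pu andbT.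
    by move: nu; clear -u'; case: u'.
  - case/mapP=> u' + ->.
    rewrite /pal_factors !mem_undup !mem_filter !mem_factors infix_map pal_map.
    by case: u'.
done.
Qed.

Lemma in_BR_map w v : in_BR (map f w) v -> exists vb, v = map f vb /\ in_BR w vb.
Proof.
case=> Bs [nBs aBs ew ev].
have eB : map (map f) (reshape (shape Bs) w) = Bs.
  by rewrite map_reshape ew flattenK.
exists (flatten (rev (reshape (shape Bs) w))); split.
  by rewrite ev map_flatten map_rev eB.
exists (reshape (shape Bs) w); split.
- by move: nBs; rewrite -eB; case: (reshape _ _).
- move: aBs; rewrite -{1}eB all_map => h; apply/allP => B Bin.
  by have := allP h B Bin; rewrite /= -!size_eq0 size_map.
- apply: (inj_map finj); rewrite ew -{1}eB -map_flatten //.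
- done.
Qed.
End Map.

Section Pos.
Variable T : eqType.
Implicit Types (u y z s : seq T).

Lemma infix_nth u z d : infix u z -> exists i, i + size u <= size z /\
  forall t, t < size u -> nth d z (i + t) = nth d u t.
Proof.
case/infixP=> s [s' ->]; exists (size s); split; first by rewrite !size_cat; lia.
move=> t ht; rewrite nth_cat ifF; last lia.
by rewrite addKn nth_cat ht.
Qed.

Lemma infix_split u y z d : infix u (y ++ z) -> infix u y \/
  exists i, [/\ size y < i + size u, i + size u <= size y + size z &
  forall t, t < size u -> nth d (y ++ z) (i + t) = nth d u t].
Proof.
move=> iu; have [i [hi H]] := infix_nth d iu.
case/infixP: iu => s [s' e].
case: (leqP (size s + size u) (size y)) => h.
  left; have : take (size y) (y ++ z) = take (size y) (s ++ u ++ s') by rewrite e.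
  rewrite take_size_cat // take_cat ifF; last lia.
  rewrite take_cat ifF; last lia.
  by move=> ->; rewrite infix_infix.
right; exists (size s); split; first lia.
  by move: (congr1 size e); rewrite !size_cat; lia.
move=> t ht; rewrite e nth_cat ifF; last lia.
by rewrite addKn nth_cat ht.
Qed.

Lemma run_ext p c k : rich p ->
  (forall r, 0 < r -> r <= k -> exists u, [/\ u != [::], palindrome u,
     suffix u (p ++ nseq r c) & ~~ infix u (p ++ nseq r.-1 c)]) ->
  rich (p ++ nseq k c).
Proof.
move=> rp; elim: k => [|k IH] H; first by rewrite cats0.
have e : p ++ nseq k.+1 c = rcons (p ++ nseq k c) c.
  by rewrite -cats1 -catA -addn1 nseqD.
have [u [nu pu su iu]] := H k.+1 erefl (leqnn _).
rewrite e; apply: (rich_step nu pu); rewrite -?e //.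
by apply: IH => r r0 rk; apply: H => //; lia.
Qed.

End Pos.

Lemma infix_nth_b (u z : seq bool) d : infix u z -> exists i, i + size u <= size z /\
  forall t, t < size u -> nth d z (i + t) = nth d u t.
Proof. exact: infix_nth. Qed.

Lemma infix_split_b (u y z : seq bool) d : infix u (y ++ z) -> infix u y \/
  exists i, [/\ size y < i + size u, i + size u <= size y + size z &
  forall t, t < size u -> nth d (y ++ z) (i + t) = nth d u t].
Proof. exact: infix_split. Qed.

Lemma infix_size_b (u z : seq bool) : infix u z -> size u <= size z.
Proof. exact: infix_size. Qed.

Ltac crunch := rewrite ?nth_cat ?size_cat ?size_nseq ?nth_nseq;
  repeat (case: ifP => ?); try lia; try done.

Definition ends_b (y : seq bool) := (y == [::]) || (last true y == false).

Lemma nseq_pal (T : eqType) (c : T) n : palindrome (nseq n c).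
Proof. by rewrite /palindrome rev_nseq. Qed.

Lemma nseq_nil (T : eqType) (c : T) n : 0 < n -> nseq n c != [::].
Proof. by case: n. Qed.

Lemma last_nseqS (c d : bool) n : last d (nseq n.+1 c) = c.
Proof. by elim: n => //. Qed.

Lemma N1 (y : seq bool) N S : ends_b y -> ~~ infix (nseq N.+1 true) y -> N < S ->
  ~~ infix (nseq S true) (y ++ nseq S.-1 true).
Proof.
move=> eb ni NS; apply/negP => /(infix_split_b true) [h|[i [h1 h2 H]]].
  move/negP: ni; apply; apply: infix_trans h.
  have -> : S = N.+1 + (S - N.+1) by lia.
  by rewrite nseqD prefix_infix.
move: h1 h2; rewrite !size_nseq => h1 h2.
have yn : y != [::] by apply/eqP => y0; move: h1 h2; rewrite y0 /=; lia.
have ly : last true y = false by move: eb; rewrite /ends_b (negbTE yn) => /eqP.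
rewrite size_nseq in H; have := H ((size y).-1 - i) ltac:(lia).
have -> : i + ((size y).-1 - i) = (size y).-1 by lia.
rewrite nth_cat ifT; last by case: (size y) h1 h2 => //; lia.
by rewrite nth_last ly nth_nseq ifT //; lia.
Qed.

Lemma N2 (x : seq bool) K t : size x < K -> 0 < t ->
  ~~ infix (nseq t false ++ nseq K true ++ nseq t false)
           (x ++ nseq K true ++ nseq t.-1 false).
Proof.
move=> hK ht; apply/negP => /(infix_nth_b true) [i []].
rewrite !size_cat !size_nseq => hl H.
have := H (t + K) ltac:(lia).
crunch.
Qed.

Lemma N3 (x : seq bool) K t : ~~ infix (nseq t false) x -> 0 < K -> 0 < t ->
  ~~ infix (nseq t false) (x ++ nseq K true ++ nseq t.-1 false).
Proof.
move=> ni hK ht; apply/negP => /(infix_split_b true) [h|[i []]].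
  by rewrite h in ni.
rewrite !size_cat !size_nseq => h1 h2 H.
case: (leqP (size x) i) => hi.
  by have := H 0 ltac:(lia); crunch.
by have := H (size x - i) ltac:(lia); crunch.
Qed.

Lemma N4 (x : seq bool) K j r : ends_b x -> size x < K -> K < r -> 0 < j ->
  ~~ infix (nseq r true) (x ++ nseq K true ++ nseq j false ++ nseq r.-1 true).
Proof.
move=> eb hK hr hj; apply/negP => /(infix_nth_b true) [i []].
rewrite !size_cat !size_nseq => hl H.
case: (leqP (i + r) (size x + K)) => h.
  have yn : x != [::] by apply/eqP => y0; move: h hK; rewrite y0 /=; lia.
  have lx : last true x = false by move: eb; rewrite /ends_b (negbTE yn) => /eqP.
  have := H ((size x).-1 - i) ltac:(lia).
  have -> : i + ((size x).-1 - i) = (size x).-1 by lia.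
  rewrite nth_cat ifT; last by case: (size x) hK h => //; lia.
  by rewrite nth_last lx nth_nseq ifT //; lia.
case: (leqP i (size x + K)) => h'.
  by have := H (size x + K - i) ltac:(lia); crunch.
by have := H 0 ltac:(lia); crunch.
Qed.

Lemma N5 (x : seq bool) K j r : size x < K -> 0 < j -> 0 < r ->
  ~~ infix (nseq r true ++ nseq j false ++ nseq K true ++ nseq j false ++ nseq r true)
           (x ++ nseq K true ++ nseq j false ++ nseq r.-1 true).
Proof.
move=> hK hj hr; apply/negP => /(infix_nth_b true) [i []].
rewrite !size_cat !size_nseq => hl H.
by have := H (r + j + K) ltac:(lia); crunch.
Qed.

Lemma N6 (x : seq bool) K j r : r <= K -> 0 < j -> 0 < r ->
  infix (nseq r true ++ nseq j false ++ nseq r true)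
        (x ++ nseq K true ++ nseq j false ++ nseq r.-1 true) ->
  infix (nseq r true ++ nseq j false ++ nseq r true) (x ++ nseq r true).
Proof.
move=> hK hj hr.
have -> : x ++ nseq K true ++ nseq j false ++ nseq r.-1 true =
  (x ++ nseq r true) ++ (nseq (K - r) true ++ nseq j false ++ nseq r.-1 true).
  by rewrite -catA (catA (nseq r true)) -nseqD subnKC.
move=> /(infix_split_b true) [//|[i []]].
rewrite !size_cat !size_nseq => h1 h2 H.
case: (ltnP (i + r + j - 1) (size x + K)) => hA.
  by have := H (r + j - 1) ltac:(lia); crunch.
case: (leqP (size x) (i + r)) => hB.
  by have := H r ltac:(lia); crunch.
by have := H (size x - i) ltac:(lia); crunch.
Qed.

Definition richb (v : seq bool) := size (pal_factors v) == size v.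

Lemma richbP v : richb v -> rich v.
Proof. by move/eqP. Qed.

Lemma nseqSr (c : bool) n : nseq n.+1 c = nseq n c ++ [:: c].
Proof. by elim: n => //= n ->. Qed.

Lemma SR (y : seq bool) N : ends_b y -> ~~ infix (nseq N.+1 true) y ->
  rich (y ++ nseq N true) -> forall n, rich (y ++ nseq n true).
Proof.
move=> eb ni rN n; case: (leqP n N) => h.
  by move: rN; rewrite -(subnKC h) nseqD catA; apply: rich_prefix.
have : forall d, rich (y ++ nseq (N + d) true).
  elim=> [|d IH]; first by rewrite addn0.
  have e : y ++ nseq (N + d.+1) true = rcons (y ++ nseq (N + d) true) true.
    by rewrite -cats1 -catA addnS nseqSr.
  rewrite e; apply: (@rich_step _ _ _ (nseq (N + d).+1 true)) => //.
  - exact: nseq_pal.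
  - by rewrite -e addnS suffix_suffix.
  - by have := N1 eb ni (_ : N < (N + d).+1); apply; lia.
by move=> /(_ (n - N)); rewrite subnKC // ltnW.
Qed.

Definition Gcond (x : seq bool) (j : nat) : bool :=
 [&& ends_b x, richb (x ++ nseq (size x) true),
  (j == 0) || all (fun K => richb (x ++ nseq K true ++ nseq j false ++ nseq (size x) true)
       && ~~ infix (nseq (size x).+1 true) (x ++ nseq K true ++ nseq j false))
       (iota 1 (size x)),
  all (fun t => suffix (nseq t false) x || ~~ infix (nseq t false) x) (iota 1 j) &
  all (fun r => suffix (nseq r true ++ nseq j false) x ||
       ~~ infix (nseq r true ++ nseq j false ++ nseq r true) (x ++ nseq r true))
      (iota 1 (size x))].

Lemma pal3 (A B : seq bool) : palindrome A -> palindrome (B ++ A ++ rev B).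
Proof.
by rewrite /palindrome => /eqP pA; rewrite !rev_cat revK -pA catA.
Qed.

Theorem G (x : seq bool) j K S : Gcond x j -> 0 < K ->
  rich (x ++ nseq K true ++ nseq j false ++ nseq S true).
Proof.
case/and5P=> eb r1 hK h2 h3 K0.
have ni1 : ~~ infix (nseq (size x).+1 true) x.
  by apply/negP => /infix_size_b; rewrite size_nseq ltnn.
have seg1 := SR eb ni1 (richbP r1).
case: j hK h2 h3 => [|j'] hK h2 h3.
  by rewrite cat0s -nseqD; apply: seg1.
set j := j'.+1.
have j0 : 0 < j by [].
case: (leqP K (size x)) => hKx.
  have := allP hK K; rewrite mem_iota => /(_ ltac:(lia)) /andP [rK niK].
  have eby : ends_b (x ++ nseq K true ++ nseq j false).
    by rewrite /ends_b !last_cat last_nseqS eqxx orbT.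
  have := SR eby niK (_ : rich _) S; rewrite -!catA; apply; exact: richbP.
have rA : rich (x ++ nseq K true) by apply: seg1.
have rB : rich ((x ++ nseq K true) ++ nseq j false).
  apply: run_ext => // t t0 tj.
  have := allP h2 t; rewrite mem_iota => /(_ ltac:(lia)) /orP [|nt].
  - case/suffixP=> x' ex.
    exists (nseq t false ++ nseq K true ++ nseq t false); split.
    + by rewrite -size_eq0 !size_cat !size_nseq; lia.
    + by have := pal3 (nseq t false) (nseq_pal true K); rewrite rev_nseq.
    + by rewrite ex -!catA catA suffix_suffix.
    + by rewrite -catA; apply: N2.
  - exists (nseq t false); split.
    + exact: nseq_nil.
    + exact: nseq_pal.
    + exact: suffix_suffix.
    + by rewrite -catA; apply: N3.
have rC : rich ((x ++ nseq K true ++ nseq j false) ++ nseq S true).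
  apply: run_ext; first by rewrite catA.
  move=> r r0 rS.
  case: (leqP r K) => hrK; last first.
    exists (nseq r true); split.
    + exact: nseq_nil.
    + exact: nseq_pal.
    + exact: suffix_suffix.
    + by rewrite -!catA; apply: N4.
  case hs: (suffix (nseq r true ++ nseq j false) x).
    case/suffixP: hs => x' ex.
    exists (nseq r true ++ nseq j false ++ nseq K true ++ nseq j false ++ nseq r true).
    split.
    + by rewrite -size_eq0 !size_cat !size_nseq; lia.
    + have := pal3 (nseq r true ++ nseq j false) (nseq_pal true K).
      by rewrite rev_cat !rev_nseq -!catA.
    + by apply/suffixP; exists x'; rewrite ex -!catA.
    + by rewrite -!catA; apply: N5.
  exists (nseq r true ++ nseq j false ++ nseq r true); split.
  + by rewrite -size_eq0 !size_cat !size_nseq; lia.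
  + by have := pal3 (nseq r true) (nseq_pal false j); rewrite rev_nseq.
  + apply/suffixP; exists (x ++ nseq (K - r) true).
    by rewrite -!catA (catA (nseq (K - r) true)) -nseqD subnK.
  rewrite -!catA; apply/negP => /(N6 hrK j0 r0).
  case: (leqP r (size x)) => hrx; last first.
    by move/infix_size_b; rewrite !size_cat !size_nseq; lia.
  have := allP h3 r; rewrite mem_iota hs /= => /(_ ltac:(lia)) /negP; done.
by rewrite -!catA in rC.
Qed.

Fixpoint brl (fuel : nat) (z : seq bool) : seq (seq bool) :=
  if fuel is f.+1 then
    flatten [seq (if drop k z is [::] then [:: take k z]
                  else [seq v ++ take k z | v <- brl f (drop k z)]) | k <- iota 1 (size z)]
  else [::].

Lemma in_BR_nil (T : eqType) (v : seq T) : in_BR [::] v -> False.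
Proof.
case=> [[|B Bs]] [//= _ /andP [nB _] e _].
by move: e nB; case: B.
Qed.

Lemma in_BR_inv_b (w v : seq bool) : in_BR w v ->
  v = w \/ exists B rest v', [/\ w = B ++ rest, B != [::], rest != [::],
                              in_BR rest v' & v = v' ++ B].
Proof. exact: in_BR_inv. Qed.

Lemma nn (s : seq bool) : s != [::] -> 0 < size s.
Proof. by case: s. Qed.

Lemma brl_complete f (z v : seq bool) : size z <= f -> in_BR z v -> v \in brl f z.
Proof.
elim: f z v => [|f IH] z v hz hBR.
  by case: z hz hBR => // _ /in_BR_nil.
have zn : 0 < size z by case: z hz hBR => // _ /in_BR_nil.
case: (in_BR_inv_b hBR) => [->|[B [rest [v' [ez nB nr hr ->]]]]].
  apply/flatten_mapP; exists (size z); first by rewrite mem_iota; lia.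
  by rewrite drop_size take_size mem_seq1.
apply/flatten_mapP; exists (size B).
  rewrite mem_iota ez size_cat; move: (nn nB) (nn nr); lia.
rewrite ez drop_size_cat // take_size_cat //.
case: rest nr hr ez => // r0 rs _ hr ez.
apply/mapP; exists v' => //; apply: IH => //.
by move: hz (nn nB); rewrite ez size_cat; lia.
Qed.

Definition ntrail (v : seq bool) := find negb (rev v).
Definition stripa (v : seq bool) := take (size v - ntrail v) v.

Definition Lcheck m :=
  Gcond [::] m &&
  all (fun d => all (fun v' => (v' == stripa v' ++ nseq (ntrail v') true) && Gcond (stripa v') d)
                    (brl (m - d).+1 (nseq (m - d) false ++ [:: true])))
      (iota 0 m.+1).

Lemma L3 : Lcheck 3. Proof. by vm_compute. Qed.
Lemma L4 : Lcheck 4. Proof. by vm_compute. Qed.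

Lemma cat_split (B rest w : seq bool) : w = B ++ rest ->
  B = take (size B) w /\ rest = drop (size B) w.
Proof. by move=> ->; rewrite take_size_cat // drop_size_cat. Qed.

Lemma shape m : Lcheck m -> forall n v, 0 < n ->
  in_BR (nseq n true ++ nseq m false ++ [:: true]) v ->
  exists x j K S, [/\ Gcond x j, 0 < K & v = x ++ nseq K true ++ nseq j false ++ nseq S true].
Proof.
case/andP=> G0 Lc n; elim: n {-2}n (leqnn n) => [|N IH] n hn v n0 hBR; first lia.
case: (in_BR_inv_b hBR) => [->|[B [rest [v' [ez nB nr hr ->]]]]].
  by exists [::], m, n, 1.
have [eB er] := cat_split ez.
have sB := nn nB; have sr := nn nr.
have hsz : size B + size rest = n + m + 1.
  by move: (congr1 size ez); rewrite !size_cat !size_nseq /=; lia.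
case: (ltnP (size B) n) => hB.
  have eB' : B = nseq (size B) true.
    by rewrite {1}eB take_cat size_nseq hB take_nseq //; exact: ltnW.
  have er' : rest = nseq (n - size B) true ++ nseq m false ++ [:: true].
    by rewrite er drop_cat size_nseq hB drop_nseq.
  rewrite er' in hr.
  have [x [j [K [S [gx K0 ev']]]]] := IH (n - size B) ltac:(lia) v' ltac:(lia) hr.
  exists x, j, K, (S + size B); split => //.
  by rewrite ev' nseqD -!catA -eB'.
set d := size B - n.
have dm : d <= m by lia.
have eB' : B = nseq n true ++ nseq d false.
  rewrite {1}eB take_cat size_nseq ltnNge hB /=; congr (_ ++ _).
  rewrite take_cat size_nseq; case: ltnP => h.
    by rewrite take_nseq //; exact: ltnW.
  have -> : size B - n - m = 0 by lia.
  by rewrite take0 cats0 /d; congr nseq; lia.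
have er' : rest = nseq (m - d) false ++ [:: true].
  rewrite er drop_cat size_nseq ltnNge hB /= drop_cat size_nseq.
  case: ltnP => h; first by rewrite drop_nseq.
  have -> : size B - n - m = 0 by lia.
  by rewrite drop0 /d; have -> : m - (size B - n) = 0 by lia.
have hv' : v' \in brl (m - d).+1 (nseq (m - d) false ++ [:: true]).
  by apply: brl_complete; [rewrite size_cat size_nseq addn1 | rewrite -er'].
have := allP Lc d; rewrite mem_iota => /(_ ltac:(lia)) /allP /(_ v' hv').
case/andP=> /eqP ev' gx.
exists (stripa v'), d, (ntrail v' + n), 0; split => //; first lia.
by rewrite {1}ev' eB' nseqD cats0 -!catA.
Qed.

Section Main.
Variables (T : eqType) (a b : T).
Hypothesis ab : a != b.

Definition fb (c : bool) : T := if c then a else b.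

Lemma fb_inj : injective fb.
Proof.
by case=> [] [] //= e; move: ab; rewrite e eqxx.
Qed.

Lemma form1 m n v : Lcheck m -> 0 < n ->
  in_BR (nseq n a ++ nseq m b ++ [:: a]) v -> rich v.
Proof.
move=> Lm n0.
have -> : nseq n a ++ nseq m b ++ [:: a] =
          map fb (nseq n true ++ nseq m false ++ [:: true]).
  by rewrite !map_cat !map_nseq.
case/(in_BR_map fb_inj) => vb [-> hb].
apply/(rich_map fb_inj).
have [x [j [K [S [gx K0 ->]]]]] := shape Lm n0 hb.
exact: G.
Qed.
End Main.
Unset Implicit Arguments.

Theorem mainTheorem13 (T : eqType) (a b : T) (n1 n2 : nat) (w v : seq T) :
  a != b -> 1 <= n1 -> (n2 = 3 \/ n2 = 4) ->
  (w = nseq n1 a ++ nseq n2 b ++ [:: a] \/ w = [:: a] ++ nseq n2 b ++ nseq n1 a) ->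
  in_BR w v -> rich v.
Proof.
move=> ab n0 hn2 hw hBR.
have Lm : Lcheck n2 by case: hn2 => ->; [exact: L3 | exact: L4].
case: hw => ew; subst w.
  exact: (form1 ab Lm n0 hBR).
apply/rich_rev; apply: (form1 ab Lm n0); apply: in_BR_rev.
have -> : rev (nseq n1 a ++ nseq n2 b ++ [:: a]) = [:: a] ++ nseq n2 b ++ nseq n1 a.
  by rewrite !rev_cat !rev_nseq catA.
exact: hBR.
Qed.
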